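(* Let $n\ge 2$, $N=\{1,\dots,n\}$, for each $i\in N$ let $A_i$ be a nonempty finite set, $A=\prod_{i\in N}A_i$, $u_i:A\to\mathbb{R}$, and fix $\lambda\in\mathbb{R}^n\setminus\{\mathbf 0\}$. For every $\Delta\in(0,1)$ and every $a^{[n]}\in\mathcal{A}^*_\lambda(\Delta)$, $$\frac{\partial W_\lambda}{\partial\Delta}(a^{[n]},\Delta)\le 0,$$ where the derivative is taken with respect to the second argument with $a^{[n]}$ held fixed.
   Context: For $a^{[n]}=(a^1,\dots,a^n)\in A^n$ extend indices by $a^s=a^{s-n}$ for $s\ge n+1$, and for $\Delta\in(0,1]$ define $$v_i^\Delta(a^{[n]})=\frac{\sum_{k=1}^n\Delta^{k-1}u_i(a^{i+k-1})}{\sum_{k=1}^n\Delta^{k-1}},\qquad W_\lambda(a^{[n]},\Delta)=\sum_{i=1}^n\lambda_i v_i^\Delta(a^{[n]}).$$ Let $\mathcal{A}^*_\lambda(\Delta)\subseteq A^n$ be the set of maximizers of $a^{[n]}\mapsto W_\lambda(a^{[n]},\Delta)$ over $A^n$. *)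

(* Defs.v *)
From HB Require Import structures.
From mathcomp Require Import all_boot all_order all_algebra.
From mathcomp Require Import all_classical all_reals all_analysis.
Set Implicit Arguments. Unset Strict Implicit. Unset Printing Implicit Defensive.
Import Order.TTheory GRing.Theory Num.Theory.
Local Open Scope ring_scope.

(* Players are 'I_n = {0,...,n-1} (0-based version of N = {1,...,n}).
   A = prod_i A_i is the type of dependent finite functions. *)
Definition profile (n : nat) (T : 'I_n -> finType) := {dffun forall i, T i}.

(* a^{[n]} : 'I_n -> profile T ; a^s (1-based, cyclically extended) becomes
   a ((s) mod n) in 0-based indexing.  Player i (0-based) at position k
   (0-based, k = 0..n-1) sees profile a ((i + k) mod n). *)
Definition vpay (R : realType) (n : nat) (T : 'I_n -> finType)
  (u : 'I_n -> profile T -> R) (a : 'I_n -> profile T) (D : R) (i : 'I_n) : R :=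
  (\sum_(k < n) D ^+ k * u i (a (insubd i ((i + k) %% n)%N))) /
  (\sum_(k < n) D ^+ k).

Definition Wlam (R : realType) (n : nat) (T : 'I_n -> finType)
  (lam : 'I_n -> R) (u : 'I_n -> profile T -> R) (a : 'I_n -> profile T) (D : R) : R :=
  \sum_(i < n) lam i * vpay u a D i.

Definition is_maximizer (R : realType) (n : nat) (T : 'I_n -> finType)
  (lam : 'I_n -> R) (u : 'I_n -> profile T -> R) (D : R) (a : 'I_n -> profile T) : Prop :=
  forall b : 'I_n -> profile T, Wlam lam u b D <= Wlam lam u a D.

(* Main.v *)
Require Import Defs.
From HB Require Import structures.
From mathcomp Require Import all_boot all_order all_algebra.
From mathcomp Require Import all_classical all_reals all_analysis.
From mathcomp Require Import ring lra.
Import Order.TTheory GRing.Theory Num.Theory.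
Local Open Scope ring_scope.

Lemma der_poly (R : realType) (c : nat -> R) (N : nat) (x : R) :
  is_derive x 1 (fun d : R => \sum_(0 <= k < N) d ^+ k * c k)
    (\sum_(0 <= k < N) (k%:R * x ^+ k.-1) * c k).
Proof.
elim: N => [|N IH].
  have -> : (fun d : R => \sum_(0 <= k < 0) d ^+ k * c k) = cst 0.
    by apply/funext => d; rewrite big_geq.
  rewrite big_geq //. exact: is_derive_cst.
have -> : (fun d : R => \sum_(0 <= k < N.+1) d ^+ k * c k) =
   (fun d : R => \sum_(0 <= k < N) d ^+ k * c k) + ((fun y : R => y) ^+ N * cst (c N)).
  apply/funext => d; rewrite big_nat_recr //=.
  congr (_ + _). by rewrite fctE /= exprfctE.
rewrite big_nat_recr //=.
apply: is_deriveD.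
have h2 : is_derive x 1 ((fun y : R => y) ^+ N * cst (c N)) (N%:R * x ^+ N.-1 * c N).
  have h := is_deriveX N (is_derive_id x (1:R)).
  have h3 := is_deriveM h (is_derive_cst (c N) x 1).
  rewrite /= scaler0 add0r /GRing.scale /= mulr1 [c N * _]mulrC in h3.
  exact: h3.
exact: h2.
Qed.
Lemma comb_id (R : realType) (x : nat -> R) (N : nat) :
  \sum_(0 <= m < N) m%:R * x m + \sum_(0 <= r < N.+1) \sum_(0 <= m < r) x m
  = N%:R * \sum_(0 <= m < N) x m.
Proof.
elim: N => [|N IH]; first by rewrite big_nat1 !big_geq // addr0 mul0r.
rewrite big_nat_recr //= [X in _ + X]big_nat_recr //=.
rewrite [\sum_(0 <= m < N.+1) x m]big_nat_recr //= -natr1.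
rewrite !mulrDr !mulrDl !mul1r. move: IH. 
set A := \sum_(0 <= m < N) _. set B := \sum_(0 <= r < N.+1) _. set C := \sum_(0 <= m < N) _.
lra.
Qed.

Lemma telesc (R : realType) (D : R) (r : nat) :
  (1 - D) * \sum_(0 <= k < r) D ^+ k = 1 - D ^+ r.
Proof.
elim: r => [|r IH]; first by rewrite big_geq // mulr0 expr0 subrr.
rewrite big_nat_recr //= mulrDr IH exprS. lra.
Qed.

Lemma rot_id (R : realType) (n r : nat) (D : R) (g : nat -> R)
  (hg : forall m, g (m + n)%N = g m) (hr : (r <= n)%N) :
  D ^+ r * \sum_(0 <= k < n) D ^+ k * g (k + r)%N =
  \sum_(0 <= m < n) D ^+ m * g m - \sum_(0 <= m < r) D ^+ m * g m
  + D ^+ n * \sum_(0 <= m < r) D ^+ m * g m.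
Proof.
rewrite mulr_sumr.
have -> : \sum_(0 <= k < n) D ^+ r * (D ^+ k * g (k + r)%N) =
          \sum_(0 + r <= k < n + r) D ^+ k * g k.
  rewrite big_addn addnK; apply: eq_bigr => k _; by rewrite exprD mulrA [D ^+ r * _]mulrC.
rewrite add0n (big_cat_nat hr (leq_addr r n)) /=.
have -> : \sum_(n <= i < n + r) D ^+ i * g i = \sum_(0 <= i < n + r - n) D ^+ (i + n) * g (i + n)%N.
  by rewrite -{1}[n]add0n big_addn.
rewrite addKn mulr_sumr.
under [X in _ = _ + X]eq_bigr => i _ do rewrite mulrA -exprD addnC -hg.
rewrite (big_cat_nat (leq0n r) hr) /=.
lra.
Qed.

Lemma Wlam_eq (R : realType) (n : nat) (T : 'I_n -> finType)
  (lam : 'I_n -> R) (u : 'I_n -> profile T -> R) (b : 'I_n -> profile T) (d : R) :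
  Wlam lam u b d = (\sum_(0 <= k < n) d ^+ k *
      (\sum_(i < n) lam i * u i (b (insubd i ((i + k) %% n)%N))))
     / (\sum_(0 <= k < n) d ^+ k * 1).
Proof.
rewrite /Wlam /vpay.
under eq_bigr => i _ do rewrite mulrA.
rewrite -[X in X = _]mulr_suml; congr (_ / _); last first.
  by rewrite big_mkord; apply: eq_bigr => k _; rewrite mulr1.
rewrite big_mkord; under eq_bigr do rewrite mulr_sumr.
rewrite exchange_big; apply: eq_bigr => k _; rewrite mulr_sumr.
by apply: eq_bigr => i _; rewrite mulrCA.
Qed.

Lemma insubd_eq (n : nat) (i j : 'I_n) (x : nat) : (x < n)%N -> insubd i x = insubd j x.
Proof. by move=> hx; apply: val_inj; rewrite !val_insubd hx. Qed.

Theorem lemma2 (R : realType) (n : nat) (hn : (2 <= n)%N)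
  (T : 'I_n -> finType) (hT : forall i, (0 < #|T i|)%N)
  (u : 'I_n -> profile T -> R) (lam : 'I_n -> R) (hlam : exists i, lam i != 0)
  (D : R) (hD0 : 0 < D) (hD1 : D < 1)
  (a : 'I_n -> profile T) (ha : is_maximizer lam u D a) :
  derive1 (fun d : R => Wlam lam u a d) D <= 0.
Proof.
have n0 : (0 < n)%N by apply: leq_trans hn.
pose g : nat -> R := fun m => \sum_(i < n) lam i * u i (a (insubd i ((i + m) %% n)%N)).
pose Sf := fun d : R => \sum_(0 <= k < n) d ^+ k * (fun _ => 1 : R) k.
pose Pf := fun d : R => \sum_(0 <= k < n) d ^+ k * g k.
pose S := Sf D. pose P := Pf D.
have hg : forall m, g (m + n)%N = g m.
  by move=> m; rewrite /g; apply: eq_bigr => i _; rewrite addnA modnDr.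
have eS : S = \sum_(0 <= k < n) D ^+ k by apply: eq_bigr => k _; rewrite mulr1.
have Spos : 0 < S.
  rewrite eS big_ltn // expr0.
  have : 0 <= \sum_(1 <= k < n) D ^+ k by apply: sumr_ge0 => k _; rewrite exprn_ge0 // ltW.
  lra.
have Sne : S != 0 by rewrite gt_eqF.
have hrot : forall r, (r <= n)%N -> \sum_(0 <= k < n) D ^+ k * g (k + r)%N <= P.
  move=> r hr; have := ha (fun j : 'I_n => a (insubd j ((j + r) %% n)%N)).
  rewrite !Wlam_eq.
  have -> : \sum_(0 <= k < n) D ^+ k * (\sum_(i < n) lam i *
     u i ((fun j : 'I_n => a (insubd j ((j + r) %% n)%N)) (insubd i ((i + k) %% n)%N)))
     = \sum_(0 <= k < n) D ^+ k * g (k + r)%N.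
    apply: eq_bigr => k _; congr (_ * _); apply: eq_bigr => i _ /=.
    rewrite val_insubd ltn_pmod //= modnDml -addnA.
    by rewrite (insubd_eq _ _ i) ?ltn_pmod.
  by rewrite ler_pM2r // invr_gt0.
pose w := P / S.
have ePw : P = w * S by rewrite /w divfK.
have hH : forall r, (r <= n)%N -> 0 <= \sum_(0 <= m < r) D ^+ m * (g m - w).
  move=> r hr.
  have e1 := @rot_id R n r D g hg hr. have e2 := @telesc R D r. have e3 := @telesc R D n.
  have h4 := hrot r hr.
  rewrite -eS in e3.
  set Ar := \sum_(0 <= k < n) D ^+ k * g (k + r)%N in e1 h4.
  set Gr := \sum_(0 <= m < r) D ^+ m * g m in e1 *.
  have -> : \sum_(0 <= m < r) D ^+ m * (g m - w) = Gr - w * \sum_(0 <= m < r) D ^+ m.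
    rewrite /Gr mulr_sumr -sumrB; apply: eq_bigr => m _; ring.
  set Sr := \sum_(0 <= m < r) D ^+ m in e2 *.
  have eP' : \sum_(0 <= m < n) D ^+ m * g m = P by [].
  rewrite eP' in e1.
  have Dn1 : D ^+ n < 1 by rewrite exprn_ilt1 ?ltW // -lt0n.
  have key : (1 - D ^+ n) * (Gr - w * Sr) = D ^+ r * (P - Ar).
    rewrite [RHS]mulrBr e1.
    have eDr : D ^+ r = 1 - (1 - D) * Sr by lra.
    have eDn : D ^+ n = 1 - (1 - D) * S by lra.
    rewrite eDr eDn ePw; ring.
  have : 0 <= (1 - D ^+ n) * (Gr - w * Sr).
    rewrite key; apply: mulr_ge0; first by rewrite exprn_ge0 // ltW.
    lra.
  rewrite pmulr_rge0 //; lra.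
have dP := @der_poly R g n D.
have dS := @der_poly R (fun _ => 1 : R) n D.
set P' := \sum_(0 <= k < n) (k%:R * D ^+ k.-1) * g k in dP.
set S' := \sum_(0 <= k < n) (k%:R * D ^+ k.-1) * (fun _ => 1 : R) k in dS.
have hV : is_derive D 1 (fun d => (Sf d)^-1) (- (S ^- 2) *: S').
  apply: DeriveDef; first exact: derivableV Sne (@ex_derive _ _ _ _ _ _ _ dS).
  by rewrite deriveV // (@derive_val _ _ _ _ _ _ _ dS).
have hM := is_deriveM dP hV.
have eF : (fun d : R => Wlam lam u a d) = Pf * (fun d => (Sf d)^-1).
  apply/funext => d; rewrite Wlam_eq /=. by [].
rewrite eF derive1E (@derive_val _ _ _ _ _ _ _ hM).
rewrite /GRing.scale /=.
have hsum : \sum_(0 <= m < n) m%:R * (D ^+ m * (g m - w)) <= 0.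
  have hc := @comb_id R (fun m => D ^+ m * (g m - w)) n.
  have X0 : \sum_(0 <= m < n) D ^+ m * (g m - w) = 0.
    rewrite (eq_bigr (fun m => D ^+ m * g m - w * (D ^+ m * 1))); last first.
      by move=> m _; ring.
    rewrite sumrB -mulr_sumr. rewrite -/(Pf D) -/P -/(Sf D) -/S ePw; ring.
  rewrite X0 mulr0 in hc.
  have : 0 <= \sum_(0 <= r < n.+1) \sum_(0 <= m < r) D ^+ m * (g m - w).
    rewrite big_nat_cond; apply: sumr_ge0 => r /andP[/andP[_ hr] _].
    by apply: hH; rewrite -ltnS.
  lra.
have hD : D * P' - w * (D * S') = \sum_(0 <= m < n) m%:R * (D ^+ m * (g m - w)).
  rewrite /P' /S' !mulr_sumr -sumrB; apply: eq_bigr => k _.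
  case: k => [|k] /=; first by ring.
  rewrite exprS; ring.
have h1 : P' - w * S' <= 0.
  have : D * (P' - w * S') <= 0 by rewrite mulrBr mulrCA hD.
  by rewrite pmulr_rle0.
have h2 : S * P' - P * S' <= 0.
  have : S * (P' - w * S') <= 0 by rewrite pmulr_rle0.
  by rewrite ePw; move=> h; apply: le_trans h; rewrite le_eqVlt; apply/orP; left; apply/eqP; ring.
have -> : Pf D * (- S ^- 2 * S') + (Sf D)^-1 * P' = (S * P' - P * S') / S ^+ 2.
  rewrite -/P -/S; field; exact: Sne.
apply: mulr_le0_ge0 => //; rewrite invr_ge0; exact: sqr_ge0.
Qed.
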